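(* Let $m,n$ be distinct positive integers with greatest common divisor $\ell$. Then in $\mathbb{Q}((T))$, $$\mathbf{B}(mT)\mathbf{B}(nT)=\mathbf{B}^2(\ell T)+mT\,\mathbf{B}(nT)\,g_{n,m}(e^T)+nT\,\mathbf{B}(mT)\,g_{m,n}(e^T).$$
   Context: $\mathbf{B}(T)=T/(e^T-1)\in\mathbb{Q}[[T]]$, $\mathbf{B}(cT)=cT/(e^{cT}-1)$ for $0\ne c\in\mathbb{Q}$, and $\mathbf{B}^2(\ell T)=(\mathbf{B}(\ell T))^2$. The polynomials $g_{m,n}\in\mathbb{Q}[X]$ are defined as follows. For distinct coprime positive integers $m,n$, $g_{m,n}$ and $g_{n,m}$ are the (unique) polynomials with $\deg g_{m,n}<m-1$ and $\deg g_{n,m}<n-1$ such that $$\frac{1}{(X-1)(1+X+\cdots+X^{m-1})(1+X+\cdots+X^{n-1})}=\frac{1}{mn(X-1)}+\frac{g_{n,m}}{1+X+\cdots+X^{n-1}}+\frac{g_{m,n}}{1+X+\cdots+X^{m-1}}$$ (so in particular $g_{1,m}=0$). For general distinct positive integers $m,n$ with greatest common divisor $\ell$, set $g_{n,m}=g_{n/\ell,m/\ell}(X^\ell)$ and $g_{m,n}=g_{m/\ell,n/\ell}(X^\ell)$. *)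

(* Defs.v *)
From HB Require Import structures.
From mathcomp Require Import all_boot all_order all_algebra.
Set Implicit Arguments. Unset Strict Implicit. Unset Printing Implicit Defensive.
Import Order.TTheory GRing.Theory Num.Theory.
Local Open Scope ring_scope.

Definition fps := nat -> rat.

Definition fps_add (f g : fps) : fps := fun k => f k + g k.
Definition fps_scale (c : rat) (f : fps) : fps := fun k => c * f k.
Definition fps_mul (f g : fps) : fps :=
  fun k => \sum_(i < k.+1) f i * g (k - i)%N.
Definition fps_one : fps := fun k => (k == 0%N)%:R.
Definition fps_T : fps := fun k => (k == 1%N)%:R.
Definition fps_pow (f : fps) (n : nat) : fps := iter n (fps_mul f) fps_one.

Definition fps_exp (c : rat) : fps := fun k => c ^+ k / (k`!)%:R.

Fixpoint fps_inv_seq (f : fps) (n : nat) : seq rat :=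
  match n with
  | 0 => [:: (f 0%N)^-1]
  | n'.+1 => let s := fps_inv_seq f n' in
      rcons s (- (f 0%N)^-1 *
               \sum_(1 <= i < n'.+2) f i * nth 0 s (n'.+1 - i)%N)
  end.
Definition fps_inv (f : fps) : fps := fun k => nth 0 (fps_inv_seq f k) k.

(* (e^{cT} - 1)/(cT) = sum_k c^k T^k / (k+1)!  (constant term 1). *)
Definition fps_expm1_div (c : rat) : fps := fun k => c ^+ k / (k.+1`!)%:R.

(* B(cT) = cT / (e^{cT} - 1) = ((e^{cT}-1)/(cT))^{-1}, for c <> 0. *)
Definition Bser (c : rat) : fps := fps_inv (fps_expm1_div c).

Definition B2ser (c : rat) : fps := fps_mul (Bser c) (Bser c).

Definition fps_peval (p : {poly rat}) (E : fps) : fps :=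
  fun k => \sum_(i < size p) p`_i * fps_pow E i k.

Definition Phi (k : nat) : {poly rat} := \sum_(i < k) 'X^i.

(* For distinct coprime positive m, n: gmn = g_{m,n}, gnm = g_{n,m} are the
   polynomials with deg g_{m,n} < m-1, deg g_{n,m} < n-1 (i.e. size <= m-1,
   size <= n-1, the zero polynomial allowed) such that, in Q(X),
   1/((X-1) Phi_m Phi_n) = 1/(mn(X-1)) + g_{n,m}/Phi_n + g_{m,n}/Phi_m. *)
Definition g_coprime_spec (m n : nat) (gmn gnm : {poly rat}) : Prop :=
  [/\ (size gmn <= m - 1)%N, (size gnm <= n - 1)%N &
   (1 / (tofrac (('X - 1) * Phi m * Phi n)) : {fraction {poly rat}})
   = 1 / tofrac ((m * n)%:R * ('X - 1))
     + tofrac gnm / tofrac (Phi n) + tofrac gmn / tofrac (Phi m)].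

Definition g_spec (m n : nat) (gmn gnm : {poly rat}) : Prop :=
  let l := gcdn m n in
  exists g1 g2 : {poly rat},
    [/\ g_coprime_spec (m %/ l) (n %/ l) g1 g2,
        gmn = g1 \Po 'X^l & gnm = g2 \Po 'X^l].

(* Main.v *)
Require Import Defs.
From HB Require Import structures.
From mathcomp Require Import all_boot all_order all_algebra.
From mathcomp Require Import boolp.
From mathcomp Require Import ring.
Import GRing.Theory Num.Theory.
Local Open Scope ring_scope.

Definition F := fps.
HB.instance Definition _ := Choice.on F.
Definition fzero : F := fun _ => 0.
Definition fopp (f : F) : F := fun k => - f k.
Lemma faddA : associative (fps_add : F -> F -> F).
Proof. by move=> f g h; apply: funext => k; rewrite /fps_add addrA. Qed.
Lemma faddC : commutative (fps_add : F -> F -> F).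
Proof. by move=> f g; apply: funext => k; rewrite /fps_add addrC. Qed.
Lemma fadd0 : left_id fzero (fps_add : F -> F -> F).
Proof. by move=> f; apply: funext => k; rewrite /fps_add /fzero add0r. Qed.
Lemma faddN : left_inverse fzero fopp (fps_add : F -> F -> F).
Proof. by move=> f; apply: funext => k; rewrite /fps_add /fzero /fopp addNr. Qed.
HB.instance Definition _ := GRing.isZmodule.Build F faddA faddC fadd0 faddN.

Definition trunc (k : nat) (f : fps) : {poly rat} := \poly_(i < k.+1) f i.

Lemma sumL k (f : fps) (P : {poly rat}) :
  \sum_(i < k.+1) f i * P`_(k - i) = (trunc k f * P)`_k.
Proof. by rewrite coefM; apply: eq_bigr => i _; rewrite coef_poly ltn_ord. Qed.
Lemma sumR k (h : fps) (P : {poly rat}) :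
  \sum_(i < k.+1) P`_i * h (k - i)%N = (P * trunc k h)`_k.
Proof.
rewrite coefM; apply: eq_bigr => i _; rewrite coef_poly.
by rewrite ltnS leq_subr.
Qed.
Lemma mul_trunc (f g : fps) i k : (i <= k)%N ->
  fps_mul f g i = (trunc k f * trunc k g)`_i.
Proof.
move=> ik; rewrite /fps_mul coefM; apply: eq_bigr => j _.
have jk : (j < k.+1)%N by rewrite ltnS (leq_trans _ ik) // -ltnS ltn_ord.
have ijk : (i - j < k.+1)%N by rewrite ltnS (leq_trans (leq_subr _ _) ik).
by rewrite !coef_poly jk ijk.
Qed.
Lemma fmulA : associative (fps_mul : F -> F -> F).
Proof.
move=> f g h; apply: funext => k.
have e1 : fps_mul f (fps_mul g h) k = \sum_(j < k.+1) f j * (fps_mul g h) (k - j)%N by [].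
have e2 : fps_mul (fps_mul f g) h k = \sum_(j < k.+1) (fps_mul f g j) * h (k - j)%N by [].
rewrite /= e1 e2.
under eq_bigr => j _ do rewrite (@mul_trunc g h (k - j) k (leq_subr _ _)).
rewrite sumL.
under [in RHS]eq_bigr => j _ do rewrite (@mul_trunc f g j k (ltnSE (ltn_ord j))).
by rewrite sumR mulrA.
Qed.
Lemma fmulC : commutative (fps_mul : F -> F -> F).
Proof.
move=> f g; apply: funext => k.
by rewrite /= (@mul_trunc f g k k) // (@mul_trunc g f k k) // mulrC.
Qed.
Lemma fmul1 : left_id (fps_one : F) (fps_mul : F -> F -> F).
Proof.
move=> f; apply: funext => k; rewrite /fps_mul big_ord_recl /= /fps_one eqxx mul1r subn0.
by rewrite big1 ?addr0 // => i _; rewrite mul0r.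
Qed.
Lemma fmulDl : left_distributive (fps_mul : F -> F -> F) fps_add.
Proof.
move=> f g h; apply: funext => k.
by rewrite /fps_mul /fps_add -big_split /=; apply: eq_bigr => i _; rewrite mulrDl.
Qed.
Lemma fone_neq0 : (fps_one : F) != fzero.
Proof.
apply/eqP => /(congr1 (fun f => f 0%N)); rewrite /fps_one /fzero /= => /eqP.
by rewrite oner_eq0.
Qed.
HB.instance Definition _ := GRing.Zmodule_isComNzRing.Build F fmulA fmulC fmul1 fmulDl fone_neq0.

Lemma mulFE (f g : F) k : (f * g) k = \sum_(i < k.+1) f i * g (k - i)%N.
Proof. by []. Qed.
Lemma addFE (f g : F) k : (f + g) k = f k + g k.
Proof. by []. Qed.
Lemma oppFE (f : F) k : (- f) k = - f k.
Proof. by []. Qed.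
Lemma subFE (f g : F) k : (f - g) k = f k - g k.
Proof. by []. Qed.
Lemma oneFE k : (1 : F) k = (k == 0%N)%:R.
Proof. by []. Qed.
Lemma zeroFE k : (0 : F) k = 0.
Proof. by []. Qed.
Lemma sumFE I (r : seq I) (P : pred I) (G : I -> F) k :
  (\sum_(i <- r | P i) G i) k = \sum_(i <- r | P i) G i k.
Proof.
by elim/big_rec2: _ => //= i y1 y2 _ <-.
Qed.

Definition cst (c : rat) : F := fun k => c * (k == 0%N)%:R.
Lemma cstMl c (f : F) k : (cst c * f) k = c * f k.
Proof.
rewrite mulFE big_ord_recl /= /cst eqxx mulr1 subn0 big1 ?addr0 // => i _.
by rewrite /= mulr0 mul0r.
Qed.
Lemma cst_zmod : zmod_morphism cst.
Proof. by move=> a b; apply: funext => k; rewrite subFE /cst mulrBl. Qed.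
Lemma cst_monoid : monoid_morphism cst.
Proof.
split; first by apply: funext => k; rewrite /cst mul1r.
by move=> a b; apply: funext => k; rewrite cstMl /cst mulrA.
Qed.
HB.instance Definition _ := GRing.isZmodMorphism.Build rat F cst cst_zmod.
HB.instance Definition _ := GRing.isMonoidMorphism.Build rat F cst cst_monoid.

Lemma scaleE c (f : F) : fps_scale c f = cst c * f.
Proof. by apply: funext => k; rewrite cstMl. Qed.

Definition TT : F := fps_T.
Lemma TE0 (f : F) : (TT * f) 0%N = 0.
Proof. by rewrite mulFE big_ord1 /TT /fps_T /= mul0r. Qed.
Lemma TES (f : F) k : (TT * f) k.+1 = f k.
Proof.
rewrite mulFE big_ord_recl big_ord_recl /= /TT /fps_T /= mul0r add0r mul1r.
rewrite big1 ?addr0 ?subSS ?subn0 // => i _.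
by rewrite /bump /= mul0r.
Qed.
Lemma Tcancel (f g : F) : TT * f = TT * g -> f = g.
Proof. by move=> e; apply: funext => k; have := congr1 (fun h : F => h k.+1) e; rewrite /= !TES. Qed.

Lemma powE (f : F) i : fps_pow f i = f ^+ i.
Proof. by elim: i => [|i IH] //=; rewrite exprS -IH. Qed.

Lemma pevalE p (x : F) : fps_peval p x = (map_poly cst p).[x].
Proof.
apply: funext => k.
rewrite horner_coef size_map_inj_poly; first last.
- exact: rmorph0.
- by move=> a b /(congr1 (fun f : F => f 0%N)); rewrite /cst /= !mulr1.
rewrite sumFE; apply: eq_bigr => i _.
by rewrite coef_map cstMl powE.
Qed.

Lemma inv_seq_size (f : fps) n : size (fps_inv_seq f n) = n.+1.
Proof. by elim: n => [|n IH] //=; rewrite size_rcons IH. Qed.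
Lemma inv_seq_nth (f : fps) n j : (j <= n)%N -> nth 0 (fps_inv_seq f n) j = fps_inv f j.
Proof.
elim: n => [|n IH]; first by rewrite leqn0 => /eqP ->.
rewrite leq_eqVlt => /orP [/eqP -> //|jn].
by rewrite /= nth_rcons inv_seq_size jn IH.
Qed.
Lemma fps_invS (f : fps) n : fps_inv f n.+1 =
  - (f 0%N)^-1 * \sum_(1 <= i < n.+2) f i * fps_inv f (n.+1 - i)%N.
Proof.
rewrite {1}/fps_inv /= nth_rcons inv_seq_size ltnn eqxx.
congr (_ * _); rewrite !big_nat; apply: eq_bigr => i /andP [i1 _].
by rewrite inv_seq_nth // leq_subLR -add1n leq_add2r.
Qed.
Lemma mul_inv (f : F) : f 0%N != 0 -> f * fps_inv f = 1.
Proof.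
move=> f0; apply: funext => k; case: k => [|n].
  by rewrite mulFE big_ord1 oneFE /= /fps_inv /= mulfV.
rewrite mulFE big_ord_recl oneFE /= subn0 fps_invS.
rewrite big_add1 /= big_mkord.
rewrite mulrA mulrN mulfV // mulN1r.
under [X in _ + X]eq_bigr => i _ do rewrite /bump /=.
by rewrite addNr.
Qed.

Lemma expD a b : (fps_exp a : F) * fps_exp b = fps_exp (a + b).
Proof.
apply: funext => k; rewrite mulFE /fps_exp addrC exprDn mulr_suml.
apply: eq_bigr => [[i /=]]; rewrite ltnS => ik _.
have Hf : (k`!)%:R = ('C(k,i))%:R * (i`!)%:R * ((k-i)`!)%:R :> rat.
  by rewrite -!natrM -mulnA bin_fact.
have h1 : (i`!)%:R != 0 :> rat by rewrite pnatr_eq0 -lt0n fact_gt0.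
have h2 : ((k-i)`!)%:R != 0 :> rat by rewrite pnatr_eq0 -lt0n fact_gt0.
have h3 : ('C(k,i))%:R != 0 :> rat by rewrite pnatr_eq0 -lt0n bin_gt0.
rewrite -mulr_natr Hf; field.
by rewrite h1 h2 h3.
Qed.
Lemma exp0 : fps_exp 0 = 1 :> F.
Proof.
apply: funext => k; rewrite oneFE /fps_exp expr0n.
by case: k => [|k] //=; rewrite ?mul0r // fact0 divr1.
Qed.
Lemma expX a j : (fps_exp a : F) ^+ j = fps_exp (j%:R * a).
Proof.
elim: j => [|j IH]; first by rewrite expr0 mul0r exp0.
by rewrite exprS IH expD -natr1 mulrDl mul1r addrC.
Qed.
Definition Dser (c : rat) : F := fps_expm1_div c.
Lemma expm1 c : (fps_exp c : F) - 1 = cst c * TT * Dser c.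
Proof.
apply: funext => k; rewrite -mulrA subFE cstMl oneFE /fps_exp.
case: k => [|k]; first by rewrite TE0 mulr0 expr0 fact0 divr1 subrr.
by rewrite TES /Dser /fps_expm1_div subr0 exprS mulrA.
Qed.

Lemma poly_neq0 (p : {poly rat}) x : p.[x] != 0 -> p != 0.
Proof. by apply: contra => /eqP ->; rewrite horner0. Qed.
Lemma Phi1 k : (Phi k).[1] = k%:R.
Proof.
rewrite /Phi horner_sum (eq_bigr (fun _ => 1)); last by move=> i _; rewrite hornerXn expr1n.
by rewrite sumr_const card_ord.
Qed.

Lemma field_lemma (K : fieldType) (a b c N u v : K) :
  1 / (a * b * c) = 1 / (N * a) + v / c + u / b ->
  a != 0 -> b != 0 -> c != 0 -> N != 0 ->
  N = b * c + N * a * v * b + N * a * u * c.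
Proof.
move=> E ha hb hc hN.
transitivity (N * a * b * c * (1 / (a * b * c))); first by field; rewrite ?ha ?hb ?hc ?hN.
rewrite E; field.
by rewrite ?ha ?hb ?hc ?hN.
Qed.

Lemma frac_poly m n g1 g2 : (0 < m)%N -> (0 < n)%N -> g_coprime_spec m n g1 g2 ->
  (m * n)%:R = Phi m * Phi n + (m * n)%:R * ('X - 1) * g2 * Phi m
               + (m * n)%:R * ('X - 1) * g1 * Phi n :> {poly rat}.
Proof.
move=> m0 n0 [_ _ E].
have nz : forall p : {poly rat}, p != 0 -> tofrac p != 0 by move=> p; rewrite tofrac_eq0.
have ha : tofrac ('X - 1 : {poly rat}) != 0.
  by apply/nz/(@poly_neq0 _ 0); rewrite !hornerE oppr_eq0 oner_eq0.
have hb : tofrac (Phi m) != 0 by apply/nz/(@poly_neq0 _ 1); rewrite Phi1 pnatr_eq0 -lt0n.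
have hc : tofrac (Phi n) != 0 by apply/nz/(@poly_neq0 _ 1); rewrite Phi1 pnatr_eq0 -lt0n.
have hN : tofrac ((m * n)%:R : {poly rat}) != 0.
  by apply/nz/(@poly_neq0 _ 0); rewrite -polyC_natr hornerC pnatr_eq0 -lt0n muln_gt0 m0 n0.
apply/eqP; rewrite -tofrac_eq; apply/eqP.
rewrite !rmorphD !rmorphM /=.
rewrite !rmorphM /= in E.
rewrite !rmorph_nat in E *; rewrite rmorph_nat natrM in hN.
exact: (@field_lemma _ _ _ _ _ _ _ E ha hb hc hN).
Qed.
Set Implicit Arguments. Unset Strict Implicit.

Definition ev (Y : F) (p : {poly rat}) : F := (map_poly cst p).[Y].
Lemma evD Y p q : ev Y (p + q) = ev Y p + ev Y q.
Proof. by rewrite /ev rmorphD hornerD. Qed.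
Lemma evM Y p q : ev Y (p * q) = ev Y p * ev Y q.
Proof. by rewrite /ev rmorphM hornerM. Qed.
Lemma evB Y p q : ev Y (p - q) = ev Y p - ev Y q.
Proof. by rewrite /ev rmorphB hornerD hornerN. Qed.
Lemma evn Y k : ev Y k%:R = k%:R.
Proof. by rewrite /ev rmorph_nat -polyC_natr hornerC. Qed.
Lemma ev1 Y : ev Y 1 = 1.
Proof. by rewrite /ev rmorph1 hornerC. Qed.
Lemma evX Y : ev Y 'X = Y.
Proof. by rewrite /ev map_polyX hornerX. Qed.
Lemma evPhi Y k : ev Y (Phi k) = \sum_(i < k) Y ^+ i.
Proof.
rewrite /ev /Phi rmorph_sum horner_sum; apply: eq_bigr => i _.
by rewrite /= map_polyXn hornerXn.
Qed.

Lemma natcancel k (f g : F) : (0 < k)%N -> k%:R * f = k%:R * g -> f = g.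
Proof.
move=> k0 e.
have h : cst (k%:R)^-1 * (k%:R : F) = 1.
  by rewrite -(rmorph_nat cst) -rmorphM mulVf ?rmorph1 // pnatr_eq0 -lt0n.
by rewrite -[f]mul1r -[g]mul1r -h -!mulrA e.
Qed.

Lemma Dser0 c : Dser c 0%N != 0.
Proof. by rewrite /Dser /fps_expm1_div expr0 mul1r invr_eq0 pnatr_eq0 -lt0n fact_gt0. Qed.

Lemma algebra_core (Bl Bm Bn Dl Dm Dn G1 G2 X Sm Sn T L M' N' : F) :
  Dl * Bl = 1 -> Dm * Bm = 1 -> Dn * Bn = 1 ->
  M' * N' = Sm * Sn + M' * N' * X * G2 * Sm + M' * N' * X * G1 * Sn ->
  X = L * T * Dl -> X * Sm = M' * L * T * Dm -> X * Sn = N' * L * T * Dn ->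
  (M' * L) * (N' * L) * (T * T) * (Bm * Bn) =
  (M' * L) * (N' * L) * (T * T) * (Bl * Bl + (M' * L) * (T * (Bn * G2)) + (N' * L) * (T * (Bm * G1))).
Proof.
move=> eDl eDm eDn P eX eSm eSn.
have key : M' * N' * (X * X) = (X * Sm) * (X * Sn) + M' * N' * (X * X) * G2 * (X * Sm)
                               + M' * N' * (X * X) * G1 * (X * Sn).
  by rewrite {1}P; ring.
rewrite eSm eSn eX in key.
transitivity (M' * N' * (L * T * Dl * (L * T * Dl)) * (Bl * Bl * Bm * Bn)).
  transitivity ((M' * L) * (N' * L) * (T * T) * (Bm * Bn) * ((Dl * Bl) * (Dl * Bl))).
    by rewrite eDl !mulr1.
  ring.
rewrite key.
transitivity ((M' * L) * (N' * L) * (T * T) * (Bl * Bl * ((Dm * Bm) * (Dn * Bn))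
  + (M' * L) * (T * (Bn * G2)) * ((Dl * Bl) * (Dl * Bl)) * (Dm * Bm)
  + (N' * L) * (T * (Bm * G1)) * ((Dl * Bl) * (Dl * Bl)) * (Dn * Bn))).
  ring.
by rewrite eDl eDm eDn !mulr1.
Qed.

Unset Implicit Arguments.
Set Strict Implicit.
Theorem mainTheorem4 (m n : nat) (gmn gnm : {poly rat}) :
  (0 < m)%N -> (0 < n)%N -> m <> n ->
  g_spec m n gmn gnm ->
  forall k : nat,
    fps_mul (Bser m%:R) (Bser n%:R) k =
    fps_add (B2ser (gcdn m n)%:R)
      (fps_add
        (fps_scale m%:R (fps_mul fps_T
           (fps_mul (Bser n%:R) (fps_peval gnm (fps_exp 1)))))
        (fps_scale n%:R (fps_mul fps_T
           (fps_mul (Bser m%:R) (fps_peval gmn (fps_exp 1)))))) k.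
Proof.
move=> m0 n0 _ [g1 [g2 [Hsp egmn egnm]]] k.
set l := gcdn m n.
have l0 : (0 < l)%N by rewrite gcdn_gt0 m0.
set m' := (m %/ l)%N; set n' := (n %/ l)%N.
have em : (m' * l)%N = m by rewrite divnK // dvdn_gcdl.
have en : (n' * l)%N = n by rewrite divnK // dvdn_gcdr.
have m'0 : (0 < m')%N by move: m0; rewrite -em muln_gt0 => /andP [].
have n'0 : (0 < n')%N by move: n0; rewrite -en muln_gt0 => /andP [].
have P := @frac_poly m' n' g1 g2 m'0 n'0 Hsp.
set Y : F := fps_exp l%:R.
have eY : (fps_exp 1 : F) ^+ l = Y by rewrite expX mulr1.
have G1E : fps_peval gmn (fps_exp 1) = ev Y g1.
  by rewrite pevalE egmn map_comp_poly horner_comp map_polyXn hornerXn eY.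
have G2E : fps_peval gnm (fps_exp 1) = ev Y g2.
  by rewrite pevalE egnm map_comp_poly horner_comp map_polyXn hornerXn eY.
have Pev := congr1 (ev Y) P.
rewrite !evD !evM !evB !evn evX ev1 !evPhi natrM in Pev.
set Bl : F := Bser l%:R; set Bm : F := Bser m%:R; set Bn : F := Bser n%:R.
have eDl : Dser l%:R * Bl = 1 by apply: mul_inv; apply: Dser0.
have eDm : Dser m%:R * Bm = 1 by apply: mul_inv; apply: Dser0.
have eDn : Dser n%:R * Bn = 1 by apply: mul_inv; apply: Dser0.
have eX : Y - 1 = (l%:R : F) * TT * Dser l%:R by rewrite /Y expm1 rmorph_nat.
have eSm : (Y - 1) * \sum_(i < m') Y ^+ i = (m'%:R : F) * l%:R * TT * Dser m%:R.
  by rewrite -subrX1 /Y expX -natrM em expm1 rmorph_nat -natrM em.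
have eSn : (Y - 1) * \sum_(i < n') Y ^+ i = (n'%:R : F) * l%:R * TT * Dser n%:R.
  by rewrite -subrX1 /Y expX -natrM en expm1 rmorph_nat -natrM en.
have core := algebra_core eDl eDm eDn Pev eX eSm eSn.
rewrite -!natrM em en in core.
have E : Bm * Bn = Bl * Bl + (m%:R * (TT * (Bn * ev Y g2)) + n%:R * (TT * (Bm * ev Y g1))).
  apply: (natcancel (k := m)) => //; apply: (natcancel (k := n)) => //.
  apply: Tcancel; apply: Tcancel.
  move: core; rewrite addrA => core.
  transitivity ((m * n)%:R * (TT * TT) * (Bm * Bn)); first by rewrite natrM; ring.
  rewrite core natrM; ring.
have := congr1 (fun h : F => h k) E.
rewrite -G1E -G2E !scaleE -(rmorph_nat cst m) -(rmorph_nat cst n).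
by [].
Qed.
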